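(* Let $C$ be a set and let $L_1,L_2$ be objects of $\mathrm{SList}(C)$. Sending a morphism $L_1\to L_2$ to its associated bijection of index sets defines a bijection between the set of morphisms $L_1\to L_2$ in $\mathrm{SList}(C)$ and the set of bijections $\phi:\{0,\dots,\mathrm{length}(L_2)-1\}\xrightarrow{\sim}\{0,\dots,\mathrm{length}(L_1)-1\}$ such that $L_1[\phi(i)]=L_2[i]$ for all $i$.
   Context: $\mathrm{SList}(C)$ is the category whose objects are finite lists of elements of $C$ and whose morphisms are generated by $\mathrm{sw}_{a,b,l}:a::b::l\to b::a::l$ and $x::_mf:x::l\to x::l'$ (for $f:l\to l'$), subject to: functoriality of $x::_m-$, naturality of $\mathrm{sw}_{a,b,l}$ in $l$, $\mathrm{sw}_{b,a,l}\circ\mathrm{sw}_{a,b,l}=\mathrm{Id}$, and the hexagon relation $\mathrm{sw}_{b,c,a::l}\circ(b::_m\mathrm{sw}_{a,c,l})\circ\mathrm{sw}_{a,b,c::l}=(c::_m\mathrm{sw}_{a,b,l})\circ\mathrm{sw}_{a,c,b::l}\circ(a::_m\mathrm{sw}_{b,c,l})$. $L[i]$ denotes the $i$-th entry (0-indexed) of the list $L$. The bijection associated to a morphism $f:L_1\to L_2$ is the map $\{0,\dots,\mathrm{length}(L_2)-1\}\to\{0,\dots,\mathrm{length}(L_1)-1\}$ obtained by restricting the permutation of $\mathbb{N}$ given by the image of $w(f)$ under the homomorphism $\overline{\mathrm{A}_\infty}\to\mathrm{Perm}(\mathbb{N})$, $s_k\mapsto(k\ k+1)$; here $w$ is the functor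 $\mathrm{SList}(C)\to(\mathrm{B}\overline{\mathrm{A}_\infty})^{\mathrm{op}}$ with $w(\mathrm{sw}_{a,b,l})=s_0$ and $w(x::_mf)$ obtained from $w(f)$ by the shift $s_i\mapsto s_{i+1}$ ($\overline{\mathrm{A}_\infty}$ being the Coxeter group with generators $s_i$, $i\in\mathbb{N}$, relations $s_i^2=e$, $(s_is_{i+1})^3=e$, $(s_is_j)^2=e$ for $|i-j|>1$). Concretely, $\mathrm{sw}_{a,b,l}$ corresponds to the transposition of indices $0$ and $1$, and $x::_mf$ fixes index $0$ and acts as the bijection of $f$ shifted by one on the remaining indices. *)

(* Defs.v *)
From mathcomp Require Import all_boot.
Set Implicit Arguments. Unset Strict Implicit. Unset Printing Implicit Defensive.

Section SList.
Variable C : Type.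

(* Formal morphism terms of SList(C): generated by identities, composition,
   the swaps sw_{a,b,l} and the maps x ::_m f. *)
Inductive term : seq C -> seq C -> Type :=
| tid (l : seq C) : term l l
| tcomp (l1 l2 l3 : seq C) : term l2 l3 -> term l1 l2 -> term l1 l3
| tsw (a b : C) (l : seq C) : term [:: a, b & l] [:: b, a & l]
| tcons (x : C) (l l' : seq C) : term l l' -> term (x :: l) (x :: l').

Arguments tcomp {l1 l2 l3}.
Arguments tcons x {l l'}.

(* The congruence on terms generated by the category axioms and the
   relations of SList(C); morphisms of SList(C) are the classes of teq. *)
Inductive teq : forall l1 l2 : seq C, term l1 l2 -> term l1 l2 -> Prop :=
| teq_refl l1 l2 (f : term l1 l2) : teq f f
| teq_sym l1 l2 (f g : term l1 l2) : teq f g -> teq g f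
| teq_trans l1 l2 (f g h : term l1 l2) : teq f g -> teq g h -> teq f h
| teq_comp l1 l2 l3 (g g' : term l2 l3) (f f' : term l1 l2) :
    teq g g' -> teq f f' -> teq (tcomp g f) (tcomp g' f')
| teq_cons x l l' (f f' : term l l') : teq f f' -> teq (tcons x f) (tcons x f')
| teq_assoc l1 l2 l3 l4 (h : term l3 l4) (g : term l2 l3) (f : term l1 l2) :
    teq (tcomp h (tcomp g f)) (tcomp (tcomp h g) f)
| teq_idl l1 l2 (f : term l1 l2) : teq (tcomp (tid l2) f) f
| teq_idr l1 l2 (f : term l1 l2) : teq (tcomp f (tid l1)) f
| teq_cons_id x l : teq (tcons x (tid l)) (tid (x :: l))
| teq_cons_comp x l1 l2 l3 (g : term l2 l3) (f : term l1 l2) :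
    teq (tcons x (tcomp g f)) (tcomp (tcons x g) (tcons x f))
| teq_sw_nat a b l l' (f : term l l') :
    teq (tcomp (tsw a b l') (tcons a (tcons b f)))
        (tcomp (tcons b (tcons a f)) (tsw a b l))
| teq_sw_inv a b l : teq (tcomp (tsw b a l) (tsw a b l)) (tid [:: a, b & l])
| teq_hexagon a b c l :
    teq (tcomp (tsw b c (a :: l)) (tcomp (tcons b (tsw a c l)) (tsw a b (c :: l))))
        (tcomp (tcons c (tsw a b l)) (tcomp (tsw a c (b :: l)) (tcons a (tsw b c l)))).

(* The functor w : SList(C) -> (B A_infty-bar)^op, with a group element
   represented by a word in the generators s_k (k : nat). *)
Fixpoint word l1 l2 (f : term l1 l2) : seq nat :=
  match f with
  | tid _ => [::]
  | tcomp _ _ _ g f => word f ++ word g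
  | tsw _ _ _ => [:: 0]
  | tcons _ _ _ f => map S (word f)
  end.

End SList.

Arguments tcomp {C l1 l2 l3}.
Arguments tcons {C} x {l l'}.
Arguments tid {C}.
Arguments tsw {C}.

Definition transp (k : nat) (i : nat) : nat :=
  if i == k then k.+1 else if i == k.+1 then k else i.

(* The homomorphism from the Coxeter group to Perm(N), s_k |-> (k k+1),
   evaluated on a word: s_{k1} ... s_{kn} |-> (k1 k1+1) o ... o (kn kn+1). *)
Definition eval_word (w : seq nat) : nat -> nat :=
  foldr (fun k acc => transp k \o acc) id w.

(* The permutation of N associated to a morphism term; its restriction to
   {0,..,length L2 - 1} is the bijection associated to f : L1 -> L2. *)
Definition assoc_perm (C : Type) (L1 L2 : seq C) (f : term L1 L2) : nat -> nat :=
  eval_word (word f).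

(* Main.v *)
Require Import Defs.
From mathcomp Require Import all_boot.
From Stdlib Require Import Setoid Morphisms Program.Equality.
From mathcomp Require Import zify.

Definition sh (s : nat -> nat) (i : nat) : nat :=
  if i is j.+1 then (s j).+1 else 0.

Lemma eval_cat w1 w2 i : eval_word (w1 ++ w2) i = eval_word w1 (eval_word w2 i).
Proof. by elim: w1 => //= k w IH; rewrite IH. Qed.


Lemma eval_mapS w i : eval_word (map S w) i = sh (eval_word w) i.
Proof.
elim: w i => [|k w IH] i; first by case: i.
rewrite /= IH; case: i => [|i] //=; rewrite /transp /=.
by rewrite !eqSS; case: ifP => //; case: ifP.
Qed.

Lemma transpK k i : transp k (transp k i) = i.
Proof.
rewrite /transp; case: (eqVneq i k) => [->|hk]; first by rewrite eqn_leq ltnn /= eqxx.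
case: (eqVneq i k.+1) => [->|hk1]; first by rewrite eqxx.
by rewrite (negbTE hk) (negbTE hk1).
Qed.

Lemma eval_inj w : injective (eval_word w).
Proof.
elim: w => [|k w IH] //= i j /= h.
by apply: IH; rewrite -(transpK k (eval_word w i)) h transpK.
Qed.

Section P.
Variable C : Type.
Implicit Types l : seq C.

Lemma P_comp l1 l2 l3 (g : term l2 l3) (f : term l1 l2) i :
  assoc_perm (tcomp g f) i = assoc_perm f (assoc_perm g i).
Proof. by rewrite /assoc_perm /= eval_cat. Qed.
Lemma P_cons x l l' (f : term l l') i :
  assoc_perm (tcons x f) i = sh (assoc_perm f) i.
Proof. by rewrite /assoc_perm /= eval_mapS. Qed.
Lemma P_sw a b l i : assoc_perm (tsw a b l) i = transp 0 i.
Proof. by []. Qed.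
Lemma P_id l i : assoc_perm (tid l) i = i.
Proof. by []. Qed.
Lemma P_inj l1 l2 (f : term l1 l2) : injective (assoc_perm f).
Proof. exact: eval_inj. Qed.

Lemma P_teq l1 l2 (f g : term l1 l2) : teq f g -> forall i, assoc_perm f i = assoc_perm g i.
Proof.
move=> H; induction H => i //.
- by rewrite IHteq1 IHteq2.
- by rewrite !P_comp IHteq1 IHteq2.
- by rewrite !P_cons; case: i => //= i; rewrite IHteq.
- by rewrite !P_comp.
- by rewrite P_comp.
- by rewrite !(P_comp, P_cons); case: i => //= i; rewrite P_comp.
- rewrite !(P_comp, P_cons, P_sw).
  by case: i => [|[|i]]; rewrite /= ?P_cons.
- by rewrite P_comp !P_sw transpK.
- rewrite !(P_comp, P_cons, P_sw).
  by case: i => [|[|[|i]]].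
Qed.

Lemma size_term l1 l2 (f : term l1 l2) : size l1 = size l2.
Proof. by elim: f => //= *; congruence. Qed.

Lemma P_range l1 l2 (f : term l1 l2) i : i < size l2 ->
  assoc_perm f i < size l1 /\ forall d, nth d l1 (assoc_perm f i) = nth d l2 i.
Proof.
elim: f i => {l1 l2}.
- by move=> l i.
- move=> l1 l2 l3 g IHg f IHf i hi; rewrite P_comp.
  have [h1 h2] := IHg i hi; have [h3 h4] := IHf _ h1.
  by split => // d; rewrite h4 h2.
- by move=> a b l [|[|i]].
- move=> x l l' f IH i; rewrite P_cons; case: i => [|i] //= hi.
  by have [h1 h2] := IH i hi.
Qed.
End P.

Add Parametric Relation (C : Type) (l1 l2 : seq C) : (term l1 l2) (@teq C l1 l2)
  reflexivity proved by (@teq_refl C l1 l2)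
  symmetry proved by (@teq_sym C l1 l2)
  transitivity proved by (@teq_trans C l1 l2) as teq_rel.

Add Parametric Morphism (C : Type) (l1 l2 l3 : seq C) : (@tcomp C l1 l2 l3)
  with signature (@teq C l2 l3) ==> (@teq C l1 l2) ==> (@teq C l1 l3) as tcomp_mor.
Proof. by move=> *; apply: teq_comp. Qed.

Add Parametric Morphism (C : Type) (x : C) (l l' : seq C) : (@tcons C x l l')
  with signature (@teq C l l') ==> (@teq C (x :: l) (x :: l')) as tcons_mor.
Proof. by move=> *; apply: teq_cons. Qed.

#[local] Hint Resolve teq_refl : core.

Section S.
Variable C : Type.
Implicit Types l : seq C.

Inductive pick : C -> seq C -> seq C -> Type :=
| P0 x l : pick x (x :: l) l
| PS x y l l' : pick x l l' -> pick x (y :: l) (y :: l').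
Arguments P0 : clear implicits.
Arguments PS : clear implicits.
Arguments PS {x} y {l l'} _.

Fixpoint depth {x l l'} (p : pick x l l') : nat :=
  match p with P0 _ _ => 0 | PS _ _ _ _ p => (depth p).+1 end.

Fixpoint bring {x l l'} (p : pick x l l') : term l (x :: l') :=
  match p in pick x l l' return term l (x :: l') with
  | P0 x l => tid (x :: l)
  | PS x y l l' p => tcomp (tsw y x l') (tcons y (bring p))
  end.

Lemma tassoc l1 l2 l3 l4 (h : term l3 l4) (g : term l2 l3) (f : term l1 l2) :
  teq (tcomp (tcomp h g) f) (tcomp h (tcomp g f)).
Proof. by apply: teq_sym; apply: teq_assoc. Qed.

Lemma swap_pick a b L0 L0' L0'' (p : pick a L0 L0') (q : pick b L0' L0'') :
  exists X (p' : pick b L0 X) (q' : pick a X L0''),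
    teq (tcomp (tsw a b L0'') (tcomp (tcons a (bring q)) (bring p)))
        (tcomp (tcons b (bring q')) (bring p')).
Proof.
elim: p b L0'' q => {a L0 L0'}.
- move=> a L0' b L0'' q.
  exists (a :: L0''), (PS a q), (P0 a L0'') => /=.
  by rewrite teq_cons_id teq_idl teq_idr.
- move=> a y L1 L1' p1 IH b L0'' q.
  dependent destruction q.
  + exists L1, (P0 y L1), p1 => /=.
    rewrite teq_idr teq_cons_id teq_idl teq_assoc teq_sw_inv teq_idl.
    reflexivity.
  + rename x into b; rename l' into L0''.
    have [X1 [p1' [q1' H]]] := IH _ _ q.
    exists (y :: X1), (PS y p1'), (PS y q1') => /=.
    rewrite !teq_cons_comp !tassoc.
    rewrite (teq_assoc (tcons a (tcons y (bring q)))) -teq_sw_nat tassoc.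
    rewrite (teq_assoc (tcons a (tsw y b L0'')))
      (teq_assoc (tsw a b (y :: L0''))) teq_hexagon.
    rewrite !tassoc -!teq_cons_comp H teq_cons_comp.
    rewrite (teq_assoc (tsw y b (a :: L0''))) teq_sw_nat !tassoc.
    reflexivity.
Qed.


Inductive nf : seq C -> seq C -> Type :=
| nf_nil : nf [::] [::]
| nf_cons x l l' l2 : pick x l l' -> nf l' l2 -> nf l (x :: l2).
Arguments nf_cons : clear implicits.
Arguments nf_cons {x l l' l2} _ _.

Fixpoint nfterm {l1 l2} (n : nf l1 l2) : term l1 l2 :=
  match n in nf l1 l2 return term l1 l2 with
  | nf_nil => tid [::]
  | nf_cons x l l' l2 p g => tcomp (tcons x (nfterm g)) (bring p)
  end.

Lemma act l1 l2 (f : term l1 l2) : forall l0 (n : nf l0 l1),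
  exists n' : nf l0 l2, teq (nfterm n') (tcomp f (nfterm n)).
Proof.
elim: f => {l1 l2}.
- by move=> l l0 n; exists n; rewrite teq_idl.
- move=> l1 l2 l3 g IHg f IHf l0 n.
  have [n1 H1] := IHf _ n; have [n2 H2] := IHg _ n1.
  by exists n2; rewrite H2 H1 teq_assoc.
- move=> a b l l0 n.
  dependent destruction n; rename n into m.
  dependent destruction m.
  have [X [p' [q' H]]] := swap_pick _ _ _ _ _ p p0.
  exists (nf_cons p' (nf_cons q' m)) => /=.
  rewrite !teq_cons_comp !tassoc (teq_assoc (tsw a b l)) teq_sw_nat tassoc H.
  by [].
- move=> x l l' f IH l0 n.
  dependent destruction n.
  have [m' H] := IH _ n.
  exists (nf_cons p m') => /=.
  by rewrite H teq_cons_comp tassoc.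
Qed.

Lemma P_bring {x l l'} (p : pick x l l') i :
  assoc_perm (bring p) i = if i == 0 then depth p else if i <= depth p then i.-1 else i.
Proof.
elim: p i => [y l0|y z l0 l0' p IH] i /=; first by case: i.
rewrite P_comp P_sw P_cons.
case: i => [|[|i]] //=; first by rewrite IH.
by rewrite IH /= ltnS; case: ifP.
Qed.

Lemma pick_nth0 {x l l'} (p : pick x l l') d : nth d l (depth p) = x.
Proof. by elim: p. Qed.

Lemma pick_nthS {x l l'} (p : pick x l l') d j :
  nth d l (if j < depth p then j else j.+1) = nth d l' j.
Proof.
elim: p j => [y l0|y z l0 l0' p IH] j //=.
case: j => [|j] //=; rewrite ltnS -IH; by case: ifP.
Qed.

Lemma pick_size {x l l'} (p : pick x l l') : size l = (size l').+1.
Proof. by elim: p => //= *; congruence. Qed.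

Lemma depth_lt {x l l'} (p : pick x l l') : depth p < size l.
Proof. by elim: p. Qed.

Lemma pick_exists k l : k < size l -> exists x l', exists p : pick x l l', depth p = k.
Proof.
elim: l k => [|y l IH] [|k] //= hk.
- by exists y, l, (P0 y l).
- have [x [l' [p hp]]] := IH k hk.
  by exists x, (y :: l'), (PS y p); rewrite /= hp.
Qed.

Lemma pick_uniq x l l1 (p1 : pick x l l1) x' l2 (p2 : pick x' l l2) :
  depth p1 = depth p2 -> x = x' /\ l1 = l2 /\ JMeq p1 p2.
Proof.
elim: p1 x' l2 p2 => [y l0|y z l0 l0' p IH] x' l2 p2;
  dependent destruction p2 => //= h.
have [e1 [e2 e3]] := IH _ _ _ (eq_add_S _ _ h).
by subst.
Qed.

Lemma nf_size l1 l2 (n : nf l1 l2) : size l1 = size l2.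
Proof. elim: n => //= x l l' l2' p g IH; by rewrite (pick_size p) IH. Qed.

Lemma P_nf0 {x l l' l2} (p : pick x l l') (g : nf l' l2) :
  assoc_perm (nfterm (nf_cons p g)) 0 = depth p.
Proof. by rewrite /= P_comp P_cons P_bring. Qed.

Lemma P_nfS {x l l' l2} (p : pick x l l') (g : nf l' l2) j :
  assoc_perm (nfterm (nf_cons p g)) j.+1 = assoc_perm (bring p) (assoc_perm (nfterm g) j).+1.
Proof. by rewrite /= P_comp P_cons. Qed.

Lemma nf_uniq l1 l2 (n1 n2 : nf l1 l2) :
  (forall i, i < size l2 -> assoc_perm (nfterm n1) i = assoc_perm (nfterm n2) i) ->
  nfterm n1 = nfterm n2.
Proof.
elim: n1 n2 => [|x l l' l2' p g IH] n2; dependent destruction n2 => // h.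
have h0 := h 0 isT; rewrite !P_nf0 in h0.
have [_ [e1 e2]] := pick_uniq _ _ _ p _ _ p0 h0.
move: e2; subst l'0 => e2; have e := JMeq_eq e2; subst p0 => /=.
rewrite (IH n2) //.
move=> i hi; have := h i.+1 hi; rewrite !P_nfS => /P_inj; by case.
Qed.

Fixpoint nf_id l : nf l l :=
  match l with [::] => nf_nil | x :: l => nf_cons (P0 x l) (nf_id l) end.

Lemma nf_id_teq l : teq (nfterm (nf_id l)) (tid l).
Proof.
elim: l => [|x l IH] //=.
by rewrite teq_idr IH teq_cons_id.
Qed.

Lemma term_nf l1 l2 (f : term l1 l2) : exists n : nf l1 l2, teq (nfterm n) f.
Proof.
have [n H] := act _ _ f _ (nf_id l1).
by exists n; rewrite H nf_id_teq teq_idr.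
Qed.

Lemma surj L2 : forall L1 (psi : nat -> nat), size L1 = size L2 ->
  (forall i, i < size L2 -> psi i < size L1) ->
  (forall i j, i < size L2 -> j < size L2 -> psi i = psi j -> i = j) ->
  (forall d i, i < size L2 -> nth d L1 (psi i) = nth d L2 i) ->
  exists n : nf L1 L2, forall i, i < size L2 -> assoc_perm (nfterm n) i = psi i.
Proof.
elim: L2 => [|y L2 IH] L1 psi hs hr hinj hl.
  by case: L1 hs hr hinj hl => // _ _ _ _; exists nf_nil.
have [x [L1' [p hp]]] := pick_exists (psi 0) L1 (hr 0 isT).
have ex : x = y by rewrite -(pick_nth0 p y) hp (hl y 0 isT).
subst x.
have hs' := pick_size p.
pose psi' := fun j => if psi j.+1 < psi 0 then psi j.+1 else (psi j.+1).-1.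
have hne : forall j, j < size L2 -> psi j.+1 <> psi 0.
  by move=> j hj /(hinj j.+1 0 hj isT).
have hback : forall j, j < size L2 ->
    (if psi' j < depth p then psi' j else (psi' j).+1) = psi j.+1.
  move=> j hj; rewrite hp /psi'; have := hne j hj.
  case: (ltnP (psi j.+1) (psi 0)) => h1 /=; case: ltnP => h2 h3; lia.
have [g hg] : exists g : nf L1' L2,
    forall i, i < size L2 -> assoc_perm (nfterm g) i = psi' i.
  apply: IH.
  - by move: hs; rewrite hs' /=; case.
  - move=> i hi; have := hr i.+1 hi; have := hne i hi; have := hr 0 isT.
    rewrite /psi' hs'; case: (ltnP (psi i.+1) (psi 0)) => h1; lia.
  - move=> i j hi hj; rewrite /psi'.
    have := hne i hi; have := hne j hj.
    have := hinj i.+1 j.+1 hi hj.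
    case: (ltnP (psi i.+1) (psi 0)) => h1; case: (ltnP (psi j.+1) (psi 0)) => h2; lia.
  - by move=> d i hi; rewrite -(pick_nthS p) hback // (hl d i.+1 hi).
exists (nf_cons p g) => [[|i]] hi; first by rewrite P_nf0.
by rewrite P_nfS hg // P_bring /= -hback //.
Qed.
End S.

Theorem corollary2p9 (C : Type) (L1 L2 : seq C) :
  (* the associated bijection of every morphism is a bijection
     phi : {0..len L2 - 1} -> {0..len L1 - 1} with L1[phi i] = L2[i] *)
  (forall f : term L1 L2,
     exists phi : 'I_(size L2) -> 'I_(size L1),
       [/\ bijective phi,
           forall i, tnth (in_tuple L1) (phi i) = tnth (in_tuple L2) i
         & forall i : 'I_(size L2), nat_of_ord (phi i) = assoc_perm f i]) /\
  (* well defined on morphisms (classes of terms) *)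
  (forall f g : term L1 L2, teq f g ->
     forall i, i < size L2 -> assoc_perm f i = assoc_perm g i) /\
  (* injective on morphisms *)
  (forall f g : term L1 L2,
     (forall i, i < size L2 -> assoc_perm f i = assoc_perm g i) -> teq f g) /\
  (* surjective onto the set of such bijections *)
  (forall phi : 'I_(size L2) -> 'I_(size L1),
     bijective phi ->
     (forall i, tnth (in_tuple L1) (phi i) = tnth (in_tuple L2) i) ->
     exists f : term L1 L2, forall i : 'I_(size L2), assoc_perm f i = phi i).
Proof.
split; [|split; [|split]].
- move=> f.
  pose phi := fun i : 'I_(size L2) => Ordinal (proj1 (P_range _ _ _ f _ (ltn_ord i))).
  exists phi; split => //.
  + apply: inj_card_bij; last by rewrite !card_ord (size_term _ _ _ f).
    by move=> i j /(congr1 val) /= /P_inj /val_inj.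
  + move=> i; rewrite (tnth_nth (tnth (in_tuple L2) i)) /=.
    rewrite (proj2 (P_range _ _ _ f _ (ltn_ord i))).
    by rewrite -(tnth_nth (tnth (in_tuple L2) i) (in_tuple L2)).
- by move=> f g h i _; apply: P_teq.
- move=> f g h.
  have [n1 h1] := term_nf _ _ _ f; have [n2 h2] := term_nf _ _ _ g.
  rewrite -h1 -h2 (nf_uniq _ _ _ n1 n2) //.
  by move=> i hi; rewrite (P_teq _ _ _ _ _ h1) (P_teq _ _ _ _ _ h2) h.
- move=> phi hb hl.
  pose psi := fun i => if insub i is Some o then nat_of_ord (phi o) else 0.
  have hpsi : forall i (hi : i < size L2), psi i = phi (Ordinal hi).
    by move=> i hi; rewrite /psi insubT.
  have hs : size L1 = size L2.
    by have := bij_eq_card hb; rewrite !card_ord.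
  have [n hn] : exists n : nf C L1 L2,
      forall i, i < size L2 -> assoc_perm (nfterm C n) i = psi i.
    apply: (surj C) => //.
    + by move=> i hi; rewrite hpsi.
    + move=> i j hi hj; rewrite !hpsi => /val_inj /(bij_inj hb).
      by move/(congr1 val).
    + move=> d i hi; rewrite hpsi.
      have := hl (Ordinal hi); rewrite !(tnth_nth d) /=.
      done.
  exists (nfterm C n) => i; rewrite hn // hpsi.
  by congr (nat_of_ord (phi _)); apply: val_inj.
Qed.
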